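(* Let $(X,d)$ be a complete Alexandrov space with curvature bounded above by $\kappa$. Let $f:X\to(-\infty,\infty]$ be a convex, lower semi-continuous function (not identically $+\infty$), and let $G\subset X$ be a closed, geodesically convex set containing a nonempty sublevel set of $f$, with $\operatorname{diam}G<\pi/(2\sqrt\kappa)$ if $\kappa>0$. Let $\{\lambda_k\}_{k\ge1}$ be positive with $\sum_{k=1}^\infty\lambda_k=+\infty$. Fix $x_0\in G$ and set $x_k:=J^f_{\lambda_k}(x_{k-1})$ for $k\ge1$, where $J^f_\lambda(x):=\operatorname{argmin}_{y\in G}\{f(y)+\frac1{2\lambda}d(x,y)^2\}$. Then $\lim_{k\to\infty}f(x_k)=\inf_{y\in G}f(y)$.
   Context: Minimal geodesics $x\#_ty$ satisfy $d(x\#_sy,x\#_ty)=|s-t|d(x,y)$; a set is geodesically convex if it contains all minimal geodesics between its points. A geodesic metric space is an Alexandrov space of curvature bounded above by $\kappa$ if for all $x,y,z$ (perimeter $<2\pi/\sqrt\kappa$ if $\kappa>0$), all $t\in[0,1]$ and all minimal geodesics, $d(y\#_tz,x)\le d_{\mathbb{M}^2(\kappa)}(\tilde y\#_t\tilde z,\tilde x)$, where $\tilde x\tilde y\tilde z$ is a comparison triangle with the same side lengths in the simply connected surface $\mathbb{M}^2(\kappa)$ of constant curvature $\kappa$. $f$ is convex if $f(x\#_ty)\le(1-t)f(x)+tf(y)$ along all minimal geodesics. The minimizer defining $J^f_\lambda(x)$ exists and is unique under these assumptions. *)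

(* Defs.v *)
From HB Require Import structures.
From mathcomp Require Import all_boot all_order all_algebra.
From mathcomp Require Import all_classical all_reals all_analysis.
Set Implicit Arguments. Unset Strict Implicit. Unset Printing Implicit Defensive.
Import Order.TTheory GRing.Theory Num.Theory.
Local Open Scope classical_set_scope.
Local Open Scope ring_scope.

Section MetricDefs.
Variables (R : realType) (X : Type) (d : X -> X -> R).

Definition is_metric : Prop :=
  (forall x y, 0 <= d x y) /\ (forall x y, d x y = 0 <-> x = y) /\
  (forall x y, d x y = d y x) /\ (forall x y z, d x z <= d x y + d y z).

Definition cvg_d (u : nat -> X) (l : X) : Prop :=
  forall e : R, 0 < e -> exists N, forall n, (N <= n)%N -> d (u n) l < e.

Definition cauchy_d (u : nat -> X) : Prop :=
  forall e : R, 0 < e -> exists N, forall m n, (N <= m)%N -> (N <= n)%N ->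
    d (u m) (u n) < e.

Definition complete_d : Prop := forall u, cauchy_d u -> exists l, cvg_d u l.

(* g : [0,1] -> X is a minimal geodesic from x to y:
   d(g s, g t) = |s - t| d(x,y); g t plays the role of x #_t y. *)
Definition min_geodesic (x y : X) (g : R -> X) : Prop :=
  g 0 = x /\ g 1 = y /\
  forall s t, 0 <= s <= 1 -> 0 <= t <= 1 -> d (g s) (g t) = `|s - t| * d x y.

Definition geodesic_space : Prop := forall x y, exists g, min_geodesic x y g.

Definition geod_convex (G : set X) : Prop :=
  forall x y g, G x -> G y -> min_geodesic x y g ->
    forall t, 0 <= t <= 1 -> G (g t).

Definition closed_d (G : set X) : Prop :=
  forall x, (forall e : R, 0 < e -> exists y, G y /\ d x y < e) -> G x.

End MetricDefs.

Section Model.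
Variable R : realType.
Definition P3 := (R * R * R)%type.
Definition dot3 (p q : P3) : R := p.1.1 * q.1.1 + p.1.2 * q.1.2 + p.2 * q.2.
Definition mink3 (p q : P3) : R := p.1.1 * q.1.1 + p.1.2 * q.1.2 - p.2 * q.2.
Definition sub3 (p q : P3) : P3 := (p.1.1 - q.1.1, p.1.2 - q.1.2, p.2 - q.2).
Definition arcosh (u : R) : R := ln (u + Num.sqrt (u ^+ 2 - 1)).

(* kappa = 0: the plane {z = 0}; kappa > 0: sphere of radius 1/sqrt kappa;
   kappa < 0: upper sheet of the hyperboloid <p,p>_M = 1/kappa. *)
Definition in_model (k : R) (p : P3) : Prop :=
  if k == 0 then p.2 = 0
  else if 0 < k then dot3 p p = k^-1
  else mink3 p p = k^-1 /\ 0 < p.2.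

Definition model_dist (k : R) (p q : P3) : R :=
  if k == 0 then Num.sqrt (dot3 (sub3 p q) (sub3 p q))
  else if 0 < k then acos (k * dot3 p q) / Num.sqrt k
  else arcosh (k * mink3 p q) / Num.sqrt (- k).

Definition model_geodesic (k : R) (p q : P3) (g : R -> P3) : Prop :=
  min_geodesic (model_dist k) p q g /\ forall t, 0 <= t <= 1 -> in_model k (g t).
End Model.

Definition alexandrov_le (R : realType) (X : Type) (d : X -> X -> R) (k : R) : Prop :=
  is_metric d /\ geodesic_space d /\
  forall x y z : X,
    (0 < k -> d x y + d y z + d z x < 2 * pi / Num.sqrt k) ->
    forall g, min_geodesic d y z g ->
    forall xt yt zt : P3 R, in_model k xt -> in_model k yt -> in_model k zt ->
      model_dist k xt yt = d x y -> model_dist k yt zt = d y z ->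
      model_dist k zt xt = d z x ->
    forall gt, model_geodesic k yt zt gt ->
    forall t, 0 <= t <= 1 -> d (g t) x <= model_dist k (gt t) xt.

(* Main.v *)
Require Import Defs.
From HB Require Import structures.
From mathcomp Require Import all_boot all_order all_algebra.
From mathcomp Require Import all_classical all_reals all_analysis.
From mathcomp Require Import ring lra.
Import Order.TTheory GRing.Theory Num.Theory.
Local Open Scope classical_set_scope.
Local Open Scope ring_scope.
Section RealCore.
Variable R : realType.

Lemma block_lemma (P a : nat -> R) :
  (forall i, 0 < P i) -> (forall i, 0 <= a i) -> (forall i, P i.+1 = P i + a i) ->
  forall m n, (m <= n)%N ->
  \sum_(i < m) a i / P i.+1 + (P n - P m) / P n <= \sum_(i < n) a i / P i.+1.
Proof.
move=> Pp a0 PS.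
have Pmono : forall m n, (m <= n)%N -> P m <= P n.
  move=> m n /subnK <-; elim: (n - m)%N => [|k IH]; first by rewrite add0n.
  by rewrite addSn PS; apply: le_trans IH _; rewrite lerDl.
move=> m n; elim: n => [|n IH].
  by rewrite leqn0 => /eqP ->; rewrite subrr mul0r addr0.
rewrite leq_eqVlt => /orP [/eqP ->|]; first by rewrite subrr mul0r addr0.
rewrite ltnS => hmn; rewrite big_ord_recr /=.
apply: le_trans (lerD (IH hmn) (lexx _)).
rewrite -addrA lerD2l.
have hPn := Pp n; have hPn1 := Pp n.+1; have hm := Pmono _ _ hmn.
rewrite PS in hPn1 *.
rewrite (_ : P n + a n - P m = (P n - P m) + a n); last by rewrite addrAC.
rewrite mulrDl lerD2r.
apply: ler_wpM2l; first by rewrite subr_ge0.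
by rewrite lef_pV2 ?posrE // lerDl.
Qed.

Lemma real_core (v D rho lam : nat -> R) (c l : R) :
  c < l -> (forall i, 0 < lam i) -> (forall i, 0 <= D i) -> (forall i, 0 <= rho i) ->
  (forall i, v i.+1 + D i ^+ 2 / (2 * lam i) <= v i) ->
  (forall i, l <= v i) ->
  (forall i, lam i * (v i.+1 - c) <= D i * rho i.+1) ->
  (forall i, rho i.+1 <= rho i + D i) ->
  (forall B, exists N, B < \sum_(i < N) lam i) -> False.
Proof.
move=> hcl lam0 D0 rho0 hA hL hB hC hdiv.
set del := l - c.
have del0 : 0 < del by rewrite subr_gt0.
set M := v 0%N - l.
pose E i := 1 + rho 0%N + \sum_(j < i) D j.
have ES i : E i.+1 = E i + D i by rewrite /E big_ord_recr /= addrA.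
have E1 i : 1 <= E i.
  rewrite /E -addrA lerDl addr_ge0 //; exact: sumr_ge0.
have E0 i : 0 < E i by apply: lt_le_trans (E1 i).
have rhoE i : rho i <= E i.
  elim: i => [|i IH]; first by rewrite /E big_ord0 addr0 lerDr.
  by rewrite ES; apply: le_trans (hC i) _; rewrite lerD2r.
have vM N : v N <= v 0%N.
  elim: N => // N IH; apply: le_trans _ IH; apply: le_trans (hA N).
  rewrite lerDl divr_ge0 // ?sqr_ge0 // mulr_ge0 // ltW //.
have key i : lam i * del <= D i * E i.+1.
  apply: le_trans (le_trans _ (hB i)) _.
    rewrite ler_wpM2l ?(ltW (lam0 i)) // /del; have := hL i.+1; lra.
  by rewrite ler_wpM2l.
have hA' i : D i ^+ 2 / lam i <= 2 * (v i - v i.+1).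
  have := hA i; rewrite -lerBrDl => h.
  have -> : D i ^+ 2 / lam i = 2 * (D i ^+ 2 / (2 * lam i)).
    by field; rewrite lt0r_neq0.
  by rewrite ler_pM2l.
have step1 N : del * \sum_(i < N) D i / E i.+1 <= 2 * (v 0%N - v N).
  elim: N => [|N IH]; first by rewrite big_ord0 mulr0 subrr mulr0.
  rewrite big_ord_recr /= mulrDr.
  have -> : 2 * (v 0%N - v N.+1) = 2 * (v 0%N - v N) + 2 * (v N - v N.+1).
    by rewrite -mulrDr addrA subrK.
  apply: lerD => //; apply: le_trans (hA' N).
  have hl := lam0 N; have he := E0 N.+1; have hd := D0 N.
  rewrite mulrA ler_pdivrMr // mulrAC ler_pdivlMr //.
  have k := key N; rewrite expr2; nra.
have [B EB] : exists B, forall N, E N <= B.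
  apply/not_existsP => nb.
  have unb : forall B, exists N, B < E N.
    move=> B; have /existsNP [N /negP] := nb B; rewrite -ltNge => h; by exists N.
  have Emono : forall m n, (m <= n)%N -> E m <= E n.
    move=> m n /subnK <-; elim: (n - m)%N => [|k IH]; first by rewrite add0n.
    by rewrite addSn ES; apply: le_trans IH _; rewrite lerDl.
  have blk := @block_lemma E D E0 D0 ES.
  have grow : forall k : nat, exists N, k%:R / 2 <= \sum_(i < N) D i / E i.+1.
    elim=> [|k [N IH]]; first by exists 0%N; rewrite big_ord0 mul0r.
    have [N' hN'] := unb (2 * E N).
    have hNN' : (N <= N')%N.
      rewrite leqNgt; apply/negP => /ltnW /Emono h.
      have := E0 N; lra.
    exists N'; apply: le_trans (blk _ _ hNN').
    rewrite -natr1 mulrDl; apply: lerD => //.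
    have h0 := E0 N'; rewrite ler_pdivlMr //; lra.
  have [N hN] := grow (Num.truncn (4 * (M / del))).+1.
  have := step1 N; have := vM N; have := hL N.
  have := truncnS_gt (4 * (M / del)).
  move: hN; set s := \sum_(i < N) _; set k := _%:R => hN hk hvN hv0 hs.
  have hs' : s <= 2 * M / del.
    rewrite ler_pdivlMr // mulrC; apply: le_trans hs _; rewrite /M; lra.
  have : 4 * (M / del) < k by [].
  rewrite mulrA; lra.
have B0 : 0 < B by apply: lt_le_trans (E0 0%N) (EB 0%N).
have step3 N : del ^+ 2 * \sum_(i < N) lam i <= 2 * B ^+ 2 * (v 0%N - v N).
  elim: N => [|N IH]; first by rewrite big_ord0 mulr0 subrr mulr0.
  rewrite big_ord_recr /= mulrDr.
  have -> : 2 * B ^+ 2 * (v 0%N - v N.+1) =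
     2 * B ^+ 2 * (v 0%N - v N) + B ^+ 2 * (2 * (v N - v N.+1)).
    by ring.
  apply: lerD => //; apply: le_trans (ler_wpM2l _ (hA' N)); last exact: sqr_ge0.
  have hl := lam0 N; have hd := D0 N.
  have h1 : lam N * del <= D N * B by apply: le_trans (key N) _; rewrite ler_wpM2l.
  have hdl : 0 <= lam N * del by apply: mulr_ge0; apply: ltW.
  rewrite mulrA ler_pdivlMr //.
  rewrite !expr2; nra.
have [N hN] := hdiv (2 * B ^+ 2 * M / del ^+ 2).
have := step3 N; have := vM N; have := hL N.
move: hN; set s := \sum_(i < N) _ => hN hvN hv0 hs.
have hd2 : 0 < del ^+ 2 by rewrite exprn_gt0.
move: hN; rewrite ltr_pdivrMr // => hN.
have : 2 * B ^+ 2 * (v 0%N - v N) <= 2 * B ^+ 2 * M.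
  rewrite ler_wpM2l ?mulr_ge0 ?sqr_ge0 // /M; lra.
rewrite (mulrC s) in hN; lra.
Qed.
End RealCore.
Lemma sup_lemma (R : realType) (A B r : R) :
  0 <= r -> (forall t, 0 < t -> t <= 1 -> A <= B + t * r) -> A <= B.
Proof.
move=> r0 h; rewrite leNgt; apply/negP => hAB.
set e := A - B.
have e0 : 0 < e by rewrite subr_gt0.
set t := e / (e + r + 1).
have den : 0 < e + r + 1 by lra.
have ht : t * (e + r + 1) = e by rewrite /t mulfVK // gt_eqF.
have t0 : 0 < t by rewrite divr_gt0.
have t1 : t <= 1 by rewrite ler_pdivrMr // mul1r; lra.
have := h t t0 t1.
have : t * r < e by nra.
rewrite /e; lra.
Qed.

Lemma geo_key (R : realType) (X : Type) (d : X -> X -> R)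
  (f : X -> \bar R) (G : set X)
  (hm : is_metric d) (hg : geodesic_space d)
  (hf_ninf : forall x, f x != -oo%E)
  (hf_convex : forall x y g, min_geodesic d x y g ->
     forall t : R, (0 <= t <= 1)%R ->
       (f (g t) <= (1 - t)%:E * f x + t%:E * f y)%E)
  (hG_convex : geod_convex d G)
  (lamn : R) (p q y : X) (a c : R) :
  0 < lamn -> G q -> G y -> f q = a%:E -> f y = c%:E ->
  (forall z, G z -> (f q + ((d p q) ^+ 2 / (2 * lamn))%:E
                     <= f z + ((d p z) ^+ 2 / (2 * lamn))%:E)%E) ->
  lamn * (a - c) <= d p q * d q y.
Proof.
move=> l0 Gq Gy fq fy hmin.
have [d0 [deq [dsym dtri]]] := hm.
have [g hgeo] := hg q y.
have [g0 [g1 gd]] := hgeo.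
set D := d p q; set rho := d q y.
have D0 : 0 <= D := d0 _ _.
have r0 : 0 <= rho := d0 _ _.
set mu := (2 * lamn)^-1.
have mu0 : 0 < mu by rewrite invr_gt0 mulr_gt0.
have hmu : 2 * lamn * mu = 1 by rewrite mulfV // gt_eqF // mulr_gt0.
suff main : forall t, 0 < t -> t <= 1 -> 2 * lamn * (a - c) <= 2 * D * rho + t * (rho ^+ 2).
  have := @sup_lemma R _ _ _ (sqr_ge0 rho) main; nra.
move=> t t0 t1.
have t01 : 0 <= t <= 1 by rewrite (ltW t0) t1.
have Gt := hG_convex q y g Gq Gy hgeo t t01.
have h1 := hmin _ Gt.
have h2 := hf_convex _ _ _ hgeo t t01.
rewrite fq fy -!EFinM -EFinD in h2.
rewrite fq in h1.
have hdq : d q (g t) = t * rho.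
  rewrite -{1}g0 gd ?lexx ?ler01 //; by rewrite sub0r normrN ger0_norm // ltW.
have hdpg : d p (g t) <= D + t * rho by rewrite -hdq; exact: dtri.
have dpg0 : 0 <= d p (g t) := d0 _ _.
case E: (f (g t)) => [w| |].
- rewrite E in h1 h2; rewrite -EFinD lee_fin in h1; rewrite lee_fin in h2.
  rewrite -/mu in h1.
  have hsq : d p (g t) ^+ 2 <= (D + t * rho) ^+ 2.
    rewrite ler_sqr ?nnegrE //; apply: addr_ge0 => //; apply: mulr_ge0 => //; exact: ltW.
  have h3 : a + D ^+ 2 * mu <= (1 - t) * a + t * c + (D + t * rho) ^+ 2 * mu.
    apply: le_trans h1 _; apply: lerD => //; apply: ler_wpM2r => //; exact: ltW.
  have h4 : t * (a - c) <= t * (2 * D * rho + t * rho ^+ 2) * mu.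
    have -> : t * (2 * D * rho + t * rho ^+ 2) * mu = (D + t * rho) ^+ 2 * mu - D ^+ 2 * mu by ring.
    lra.
  have h5 : a - c <= (2 * D * rho + t * rho ^+ 2) * mu.
    by rewrite -(ler_pM2l t0) mulrA.
  have := ler_wpM2l (ltW (mulr_gt0 (ltr0Sn _ 1) l0)) h5.
  by rewrite (mulrC _ mu) mulrA hmu mul1r.
- by rewrite E in h2.
- by have := hf_ninf (g t); rewrite E.
Qed.

Local Open Scope ereal_scope.

Theorem theorem5p1 (R : realType) (X : Type) (d : X -> X -> R) (k : R)
  (hX : alexandrov_le d k) (hcomplete : complete_d d)
  (f : X -> \bar R)
  (hf_ninf : forall x, f x != -oo)
  (hf_convex : forall x y g, min_geodesic d x y g ->
     forall t : R, (0 <= t <= 1)%R ->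
       f (g t) <= (1 - t)%:E * f x + t%:E * f y)
  (hf_lsc : forall x (c : R), c%:E < f x ->
     exists e : R, (0 < e)%R /\ forall y, (d x y < e)%R -> c%:E < f y)
  (hf_proper : exists x, f x != +oo)
  (G : set X) (hG_closed : closed_d d G) (hG_convex : geod_convex d G)
  (hG_sublevel : exists c : R, (exists x, f x <= c%:E) /\
                               (forall x, f x <= c%:E -> G x))
  (hG_diam : (0 < k)%R -> exists D : R,
       (D < pi / (2 * Num.sqrt k))%R /\
       forall x y, G x -> G y -> (d x y <= D)%R)
  (lam : nat -> R) (hlam_pos : forall n, (1 <= n)%N -> (0 < lam n)%R)
  (hlam_div : \sum_(1 <= n <oo) (lam n)%:E = +oo)
  (x0 : X) (hx0 : G x0) (xs : nat -> X) (hxs0 : xs 0%N = x0)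
  (hxs : forall n, (1 <= n)%N -> G (xs n) /\
     forall y, G y ->
       f (xs n) + ((d (xs n.-1) (xs n)) ^+ 2 / (2 * lam n))%:E
       <= f y + ((d (xs n.-1) y) ^+ 2 / (2 * lam n))%:E) :
  (fun n => f (xs n)) @ \oo --> ereal_inf [set f y | y in G].
Proof.
have [hm [hgeo _]] := hX.
have [d0 [deq [dsym dtri]]] := hm.
have dxx x : d x x = 0%R by apply/deq.
pose u n := f (xs n.+1).
have Gx n : G (xs n.+1) := (hxs n.+1 isT).1.
have umono : nonincreasing_seq u.
  apply/nonincreasing_seqP => n.
  have := (hxs n.+2 isT).2 _ (Gx n); rewrite /= dxx expr0n /= mul0r adde0 => h.
  apply: le_trans h; rewrite /u leeDl // lee_fin divr_ge0 ?sqr_ge0 //.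
  by rewrite mulr_ge0 // ltW // hlam_pos.
rewrite -cvg_shiftS.
suff -> : ereal_inf [set f y | y in G] = ereal_inf (u @` setT).
  exact: ereal_nonincreasing_cvgn.
apply/le_anti/andP; split.
  apply: le_ereal_inf_tmp => z [n _ <-]; apply: ereal_inf_lbound; exists (xs n.+1) => //.
apply: le_ereal_inf_tmp => z [y Gy <-].
case Efy: (f y) => [c| |]; last by have := hf_ninf y; rewrite Efy.
  2: by rewrite leey.
rewrite leNgt; apply/negP => hlt.
have ufin n : exists w, u n = w%:E.
  have := (hxs n.+1 isT).2 _ Gy; rewrite Efy -EFinD /u.
  case: (f (xs n.+1)) (hf_ninf (xs n.+1)) => [w _ _| |] //; first by exists w.
pose v n := fine (u n).
have hv n : u n = (v n)%:E by rewrite /v; case: (ufin n) => w ->.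
have hinf n : ereal_inf (u @` setT) <= u n by apply: ereal_inf_lbound; exists n.
case Einf: (ereal_inf (u @` setT)) hlt hinf => [l| |] hlt' hinf'; last first.
- by [].
- by have := hinf' 0%N; rewrite hv.
rewrite lte_fin in hlt'.
have lampos i : (0 < lam i.+2)%R by apply: hlam_pos.
apply: (@real_core R v (fun i => d (xs i.+1) (xs i.+2)) (fun i => d (xs i.+1) y)
   (fun i => lam i.+2) c l hlt' lampos) => //.
- move=> i /=.
  have := (hxs i.+2 isT).2 _ (Gx i); rewrite /= dxx expr0n /= mul0r adde0.
  by rewrite -/(u i.+1) -/(u i) !hv -EFinD lee_fin.
- by move=> i; have := hinf' i; rewrite hv lee_fin.
- move=> i /=.
  apply: (@geo_key R X d f G hm hgeo hf_ninf hf_convex hG_convex _ (xs i.+1)) => //.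
  + by rewrite -/(u i.+1) hv.
  + exact: (hxs i.+2 isT).2.
- move=> i /=; rewrite addrC (dsym (xs i.+1) (xs i.+2)); exact: dtri.
move=> B; apply/not_existsP => hB.
have hB' N : (\sum_(i < N) lam i.+2 <= B)%R by rewrite leNgt; apply/negP => h; apply: (hB N).
have hnd : forall n, (1 <= n)%N -> true -> 0 <= (lam n)%:E.
  by move=> n n1 _; rewrite lee_fin ltW // hlam_pos.
have hsup : \sum_(1 <= i <oo) (lam i)%:E = ereal_sup (range (fun n => \sum_(1 <= i < n) (lam i)%:E)).
  by move/ereal_nondecreasing_series/ereal_nondecreasing_cvgn/cvg_lim : hnd => ->.
have ident m : (\sum_(1 <= i < m.+2) lam i = lam 1%N + \sum_(i < m) lam i.+2)%R.
  elim: m => [|m IH]; first by rewrite big_nat1 big_ord0 addr0.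
  by rewrite big_nat_recr //= IH big_ord_recr /= addrA.
have : \sum_(1 <= i <oo) (lam i)%:E <= (lam 1%N + B)%:E.
  rewrite hsup; apply: ub_ereal_sup => _ [n _ <-].
  rewrite sumEFin lee_fin.
  have B0 : (0 <= B)%R by have := hB' 0%N; rewrite big_ord0.
  have l1 : (0 < lam 1%N)%R by apply: hlam_pos.
  case: n => [|[|m]].
  - by rewrite big_geq // addr_ge0 // ltW.
  - by rewrite big_geq // addr_ge0 // ltW.
  - by rewrite ident lerD2l.
by rewrite hlam_div leNgt ltry.
Qed.
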